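(* Let $G$ be a graph, $\mathcal{B}$ a set of balls of $G$, and $X\subset V(G)$ a set such that $|V(H)\cup X|\le p$ for every connected component $H$ of $G-X$, where $p$ is the vertex integrity of $G$. Let $\mathcal{H}$ be the set of connected components of $G-X$. Then the number of equivalence classes of the twin-block relation $\sim_{\mathcal{B}}$ on $\mathcal{H}$ is at most $2^{\mathcal{O}(p^3)}$.
   Context: For a graph $G$, $r\ge 0$ and $v\in V(G)$, the ball $B_r(v)$ is the set of vertices at distance at most $r$ from $v$. The vertex integrity of $G$ is the minimum $b$ such that there is $X\subset V(G)$ with $|V(H)\cup X|\le b$ for every connected component $H$ of $G-X$. Two components $H,H'\in\mathcal{H}$ are twin-blocks with respect to $\mathcal{B}$, written $H\sim_{\mathcal{B}}H'$, if there is an isomorphism $\alpha$ from $H$ to $H'$ such that (i) for each $u\in V(H)$ and $v\in X$, $uv\in E(G)$ iff $\alpha(u)v\in E(G)$, and (ii) for each $u\in V(H)$ and $r\in\mathbb{N}$, $B_r(u)\in\mathcal{B}$ iff $B_r(\alpha(u))\in\mathcal{B}$. This is an equivalence relation. *)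

(* Defs.v *)
From mathcomp Require Import all_boot.
From Stdlib Require Import ClassicalEpsilon.
Set Implicit Arguments. Unset Strict Implicit. Unset Printing Implicit Defensive.

Section Graph.
Variables (T : finType) (e : rel T).

Fixpoint ball (r : nat) (v : T) : {set T} :=
  match r with
  | 0 => [set v]
  | r'.+1 => ball r' v :|: [set y | [exists x in ball r' v, e x y]]
  end.

Definition rel_minus (X : {set T}) : rel T :=
  [rel a b | [&& e a b, a \notin X & b \notin X]].

Definition comp_of (X : {set T}) (x : T) : {set T} :=
  [set y | (y \notin X) && connect (rel_minus X) x y].

Definition comps (X : {set T}) : {set {set T}} :=
  [set comp_of X x | x in ~: X].

(* vertex integrity: min over X of max(|X|, max_H |V(H) u X|)
   (= |X| + largest component, with value |X| when G - X is empty) *)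
Definition vi_cost (X : {set T}) : nat :=
  maxn #|X| (\max_(H in comps X) #|H :|: X|).

Definition vertex_integrity : nat := \big[minn/#|T|]_(X : {set T}) vi_cost X.

Definition twin_blocks (B : {set {set T}}) (X : {set T}) (H H' : {set T}) : Prop :=
  exists alpha : T -> T,
    [/\ {in H &, injective alpha},
        alpha @: H = H',
        {in H &, forall u w, e u w = e (alpha u) (alpha w)},
        {in H & X, forall u v, e u v = e (alpha u) v} &
        {in H, forall u r, (ball r u \in B) = (ball r (alpha u) \in B)}].

Definition asb (P : Prop) : bool :=
  if excluded_middle_informative P then true else false.

Definition num_twin_classes (B : {set {set T}}) (X : {set T}) : nat :=
  #|[set [set H' in comps X | asb (twin_blocks B X H H')] | H in comps X]|.

End Graph.

(* Main.v *)
Require Import Defs.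
From mathcomp Require Import all_boot.
From mathcomp Require Import zify.
From Stdlib Require Import ClassicalEpsilon.

Section Proof.
Variables (T : finType) (e : rel T).

Lemma ball_path r u y : y \in ball e r u ->
  exists s, [/\ path e u s, last u s = y & size s <= r].
Proof.
elim: r y => [|r IH] y /=.
  by rewrite in_set1 => /eqP ->; exists [::].
rewrite in_setU => /orP [/IH [s [ps ls sz]] | ].
  by exists s; split => //; apply: leqW.
rewrite inE => /existsP [x /andP [xin exy]].
case: (IH x xin) => s [ps ls sz]; exists (rcons s y).
by rewrite rcons_path ps ls exy last_rcons size_rcons.
Qed.

Lemma path_ball s u r : path e u s -> size s <= r -> last u s \in ball e r u.
Proof.
elim: r s => [|r IH] s.
  by case: s => //= _ _; rewrite in_set1.
case/lastP: s => [|s y].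
  by move=> _ _ /=; rewrite in_setU (IH [::]).
rewrite rcons_path size_rcons last_rcons => /andP [ps exy] sz.
rewrite /= in_setU; apply/orP; right; rewrite inE; apply/existsP.
by exists (last u s); rewrite IH.
Qed.

Lemma ball_mono m n u : m <= n -> ball e m u \subset ball e n u.
Proof.
move=> mn; apply/subsetP => y /ball_path [s [ps <- sz]].
by apply: path_ball => //; apply: leq_trans sz _.
Qed.

Section Bound.
Variables (B : {set {set T}}) (X : {set T}) (p : nat).
Hypothesis hX : #|X| <= p.
Hypothesis hC : forall H, H \in comps e X -> #|H :|: X| <= p.

Lemma noX_bound t : sorted e t -> uniq t -> all (fun y => y \notin X) t -> size t <= p.
Proof.
case: t => [|a t] // pt ut hat.
have rp : path (rel_minus e X) a t.
  apply: (sub_in_path (P := fun y => y \notin X)) hat pt.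
  move=> x y hx hy exy; rewrite /rel_minus /= exy /=; apply/andP; split; [exact hx | exact hy].
have ha : a \notin X by case/andP: hat.
simpl in pt.
have Hin : comp_of e X a \in comps e X by apply/imsetP; exists a => //; rewrite inE.
apply: (leq_trans _ (hC _ Hin)).
rewrite -(card_uniqP ut); apply: (leq_trans _ (subset_leq_card (subsetUl _ X))).
apply: subset_leq_card; apply/subsetP => y yin; rewrite inE (allP hat y yin) /=.
exact: (path_connect rp).
Qed.

Lemma all_take_find t : all (fun y => y \notin X) (take (find (fun y => y \in X) t) t).
Proof.
elim: t => //= a t IH; case: ifP => //= ->; exact: IH.
Qed.

Lemma find_bound t : sorted e t -> uniq t -> find (fun y => y \in X) t <= p.
Proof.
move=> st ut.
have := noX_bound _ (take_sorted (find (fun y => y \in X) t) st)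
   (take_uniq _ ut) (all_take_find t).
by rewrite size_takel // find_size.
Qed.

Lemma path_size t : sorted e t -> uniq t ->
  size t <= find (fun y => y \in X) t + count (fun y => y \in X) t * p.+1.
Proof.
elim: t => [|a t IH] //= st /andP [hat ut].
have st' : sorted e t := path_sorted st.
have := IH st' ut; have := find_bound _ st' ut.
case: (a \in X) => /=; nia.
Qed.

Lemma count_bound t : uniq t -> count (fun y => y \in X) t <= p.
Proof.
move=> ut; rewrite -size_filter.
have u := filter_uniq (fun y => y \in X) ut.
rewrite -(card_uniqP u); apply: (leq_trans _ hX).
by apply: subset_leq_card; apply/subsetP => y; rewrite mem_filter => /andP [].
Qed.

Definition D := p * p + 2 * p.

Lemma uniq_path_size u s : path e u s -> uniq (u :: s) -> size s < D.
Proof.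
move=> ps us.
have := path_size (u :: s) ps us; have := find_bound (u :: s) ps us; have := count_bound _ us.
rewrite /D /=; nia.
Qed.

Lemma ball_stable r u : ball e r u = ball e (minn r D) u.
Proof.
case: (leqP r D) => h; first by [].
apply/eqP; rewrite eqEsubset (ball_mono _ _ _ (ltnW h)) andbT.
apply/subsetP => y /ball_path [s [ps <- _]].
case: (shortenP ps) => s' ps' us' _.
apply: path_ball => //; exact: ltnW (uniq_path_size _ _ ps' us').
Qed.

Lemma twin_comp H1 H2 H3 : twin_blocks e B X H1 H2 -> twin_blocks e B X H2 H3 ->
  twin_blocks e B X H1 H3.
Proof.
case=> a [ai aim ae aX aB] [b [bi bim be bX bB]]; exists (b \o a).
have aH : forall u, u \in H1 -> a u \in H2 by move=> u uin; rewrite -aim imset_f.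
split.
- move=> u w uin win /= h; apply: ai => //; apply: bi => //; exact: aH.
- by rewrite imset_comp aim.
- by move=> u w uin win /=; rewrite ae // be //; apply: aH.
- by move=> u v uin vin /=; rewrite aX // bX //; apply: aH.
- by move=> u uin r /=; rewrite aB // bB //; apply: aH.
Qed.

Variable x0 : T.

Definition I := (('I_p * 'I_p) + ('I_p * 'I_p) + ('I_p * 'I_(D.+1)))%type.

Definition bsig (H : {set T}) : 'I_p.+1 * {ffun I -> bool} :=
  (inord #|H|, [ffun i : I => match i with
     | inl (inl (i, j)) => e (nth x0 (enum H) i) (nth x0 (enum H) j)
     | inl (inr (i, j)) => e (nth x0 (enum H) i) (nth x0 (enum X) j)
     | inr (i, r) => ball e r (nth x0 (enum H) i) \in B end]).

Lemma sig_twin H H' : H \in comps e X -> H' \in comps e X -> bsig H = bsig H' ->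
  twin_blocks e B X H' H.
Proof.
move=> hH hH' hs.
have kH : #|H| <= p by apply: (leq_trans _ (hC _ hH)); apply: subset_leq_card; apply: subsetUl.
have kH' : #|H'| <= p by apply: (leq_trans _ (hC _ hH')); apply: subset_leq_card; apply: subsetUl.
have hk : #|H| = #|H'|.
  have := congr1 (fun z => val z.1) hs; rewrite /= !inordK //.
have F : forall i, (bsig H).2 i = (bsig H').2 i by rewrite hs.
have sH : size (enum H) = #|H| by rewrite cardE.
have sH' : size (enum H') = #|H'| by rewrite cardE.
have uH := enum_uniq (mem H); have uH' := enum_uniq (mem H').
pose alpha y := nth x0 (enum H) (index y (enum H')).
have ilt : forall u, u \in H' -> index u (enum H') < p.
  by move=> u uin; apply: (leq_trans _ kH'); rewrite -sH' index_mem mem_enum.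
have ilt' : forall u, u \in H' -> index u (enum H') < size (enum H).
  by move=> u uin; rewrite sH hk -sH' index_mem mem_enum.
have nI : forall u, u \in H' -> nth x0 (enum H') (index u (enum H')) = u.
  by move=> u uin; rewrite nth_index // mem_enum.
exists alpha; split.
- move=> u w uin win /eqP; rewrite /alpha nth_uniq ?ilt' // => /eqP h.
  by rewrite -(nI u uin) h nI.
- apply/setP => y; apply/imsetP/idP.
    by case=> u uin ->; rewrite -mem_enum mem_nth ?ilt'.
  move=> yin.
  have iy : index y (enum H) < size (enum H') by rewrite sH' -hk -sH index_mem mem_enum.
  exists (nth x0 (enum H') (index y (enum H))); first by rewrite -mem_enum mem_nth.
  by rewrite /alpha index_uniq // nth_index // mem_enum.
- move=> u w uin win.
  have := F (inl (inl (Ordinal (ilt u uin), Ordinal (ilt w win)))).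
  by rewrite /= !ffunE /= !nI.
- move=> u v uin vin.
  have jv : index v (enum X) < p by apply: (leq_trans _ hX); rewrite cardE index_mem mem_enum.
  have := F (inl (inr (Ordinal (ilt u uin), Ordinal jv))).
  by rewrite /= !ffunE /= nI // nth_index // mem_enum.
- move=> u uin r.
  have jr : minn r D < D.+1 by rewrite ltnS geq_minr.
  have := F (inr (Ordinal (ilt u uin), Ordinal jr)).
  by rewrite /= !ffunE /= nI // -!ball_stable.
Qed.

End Bound.
End Proof.

Theorem mainTheorem4 :
  exists c : nat,
  forall (T : finType) (e : rel T),
    symmetric e -> irreflexive e ->
  forall (B : {set {set T}}),
    (forall S, S \in B -> exists (r : nat) (v : T), S = ball e r v) ->
  forall (X : {set T}),
    (forall H, H \in comps e X -> #|H :|: X| <= vertex_integrity e) ->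
    num_twin_classes e B X <= 2 ^ (c * (vertex_integrity e) ^ 3).
Proof.
exists 7 => T e _ _ B _ X hC.
move: hC; set p := vertex_integrity e => hC.
case: (set_0Vmem (comps e X)) => [C0 | [H0 H0in]].
  by rewrite /num_twin_classes C0 imset0 cards0.
have [x0 x0X eH0] := imsetP H0in; rewrite eH0 in H0in.
have x0in : x0 \in comp_of e X x0 by rewrite inE connect0 andbT; rewrite inE in x0X.
have hX : #|X| <= p by apply: (leq_trans _ (hC _ H0in)); apply: subset_leq_card; apply: subsetUr.
have p1 : 0 < p.
  apply: (leq_trans _ (hC _ H0in)); apply/card_gt0P; exists x0; by rewrite in_setU x0in.
set C := comps e X.
pose sg := bsig T e B X p x0.
pose f H := [set H' in C | asb (twin_blocks e B X H H')].
have key : {in C &, forall H H', sg H = sg H' -> f H = f H'}.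
  move=> H H' hH hH' hs; apply/setP => K; rewrite !inE; congr andb.
  rewrite /asb; case: excluded_middle_informative => t1;
    case: excluded_middle_informative => t2 //; exfalso.
    by apply: t2; apply: twin_comp (sig_twin T e B X p hX hC x0 H H' hH hH' hs) t1.
  by apply: t1; apply: twin_comp (sig_twin T e B X p hX hC x0 H' H hH' hH (esym hs)) t2.
pose h s := f (odflt set0 [pick H in C | sg H == s]).
have sub : f @: C \subset h @: (sg @: C).
  apply/subsetP => K /imsetP [H hH ->]; apply/imsetP; exists (sg H).
    exact: imset_f.
  rewrite /h; case: pickP => [H2 /andP [h2 /eqP s2] | none] /=.
    by apply: key.
  by have := none H; rewrite hH eqxx.
rewrite /num_twin_classes -/C.
apply: leq_trans (subset_leq_card sub) _.
apply: leq_trans (leq_imset_card _ _) _.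
apply: leq_trans (max_card _) _.
rewrite card_prod card_ord card_ffun card_bool /I !card_sum !card_prod !card_ord /D.
have e1 : p.+1 <= 2 ^ p by apply: ltn_expl.
apply: leq_trans (leq_mul e1 (leqnn _)) _.
rewrite -expnD; apply: leq_pexp2l => //.
rewrite !expnS expn0; nia.
Qed.
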